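(* Let $K\ge2$, $m\ge1$, $C>0$, let $\mathbf{y}\in[K]^m$, let $\mathbf{Q}\in\mathbb{R}^{m\times m}$ be a symmetric positive semidefinite kernel matrix on the labeled nodes and $Q_{t1},\dots,Q_{tm}$ the kernel values of a test node $t$. For each class $c\in[K]$ let $\mathbf{y}^c\in\{-1,1\}^m$ with $y_i^c=1$ iff $y_i=c$, and $y_i'^c=1$ iff $y_i=c$ (else $0$). Let $\hat c$ be the originally predicted class (defined below). Set $M^c_{u_i}=\sum_jC|Q_{ij}|-1$, $M^c_{v_i}=\sum_jC|Q_{ij}|+1$, $p^L=-C\sum_{i=1}^m|Q_{ti}|$, $p^U=C\sum_{i=1}^m|Q_{ti}|$. Consider the MILP $$M(\mathbf{y}):\ \min\ p_{\hat c}-p^*$$ over $p^*\in\mathbb{R}$, $\mathbf{p}\in\mathbb{R}^K$, $b_c\in\{0,1\}$ ($c\ne\hat c$), and for each $c\in[K]$: $\boldsymbol\alpha^c,\tilde{\mathbf{y}}^c,\mathbf{z}^c,\mathbf{u}^c,\mathbf{v}^c\in\mathbb{R}^m$, $\tilde{\mathbf{y}}'^c,\mathbf{s}^c,\mathbf{t}^c\in\{0,1\}^m$, $\mathbf{R}^c\in\mathbb{R}^{m\times m}$, subject to: $\sum_{i=1}^m\big(1-\sum_{c=1}^Ky_i'^c\tilde y_i'^c\big)\le\lfloor\epsilon m\rfloor$; $\sum_{c=1}^K\tilde y_i'^c=1$ for all $i\in[m]$; $\sum_{c\ne\hat c}b_c=1$; for all $c\ne\hat c$: $p^*\ge p_c$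 and $p^*\le p_c+(1-b_c)(p^U-p^L)$; for all $c\in[K]$: $p_c=\sum_{i=1}^mz_i^cQ_{ti}$; for all $c\in[K]$ and $i,j\in[m]$: $\sum_{j}R^c_{ij}Q_{ij}-1-u_i^c+v_i^c=0$, $-C(1+\tilde y^c_i)\le R^c_{ij}+z^c_j\le C(1+\tilde y^c_i)$, $-C(1-\tilde y^c_i)\le R^c_{ij}-z^c_j\le C(1-\tilde y^c_i)$; for all $c\in[K]$, $i\in[m]$: $-\alpha_i^c\le z_i^c\le\alpha_i^c$, $\alpha^c_i-C(1-\tilde y^c_i)\le z_i^c\le C(1+\tilde y_i^c)-\alpha_i^c$, $u_i^c\le M^c_{u_i}s_i^c$, $\alpha_i^c\le C(1-s_i^c)$, $v_i^c\le M^c_{v_i}t_i^c$, $\alpha_i^c\ge Ct_i^c$, $u_i^c\ge0$, $v_i^c\ge0$, $\tilde y_i^c=2\tilde y_i'^c-1$. Then the prediction for node $t$ is certifiably robust if the optimal value of $M(\mathbf{y})$ is greater than zero and non-robust otherwise; equivalently, the optimal value equals $\min_{\tilde{\mathbf{y}}\in\mathcal{A}(\mathbf{y})}\big(p_{\hat c}(\tilde{\mathbf{y}})-\max_{c\ne\hat c}p_c(\tilde{\mathbf{y}})\big)$.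
   Context: Multi-class classification by one-vs-all kernel SVMs. For a binary label vector $\mathbf{w}\in\{-1,1\}^m$, the bias-free kernel SVM dual is $D(\mathbf{w}):\ \min_{\boldsymbol\alpha}-\sum_i\alpha_i+\tfrac12\sum_{i,j}w_iw_j\alpha_i\alpha_jQ_{ij}$ s.t. $0\le\alpha_i\le C$; $\mathcal{S}(\mathbf{w})$ is its set of optimal solutions. For multi-class labels $\tilde{\mathbf{y}}\in[K]^m$ and $c\in[K]$, let $\tilde{\mathbf{y}}^c\in\{-1,1\}^m$ with $\tilde y^c_i=1$ iff $\tilde y_i=c$, and define the class score $p_c(\tilde{\mathbf{y}})=\sum_{i=1}^m\tilde y^c_i\alpha^c_iQ_{ti}$ for any $\boldsymbol\alpha^c\in\mathcal{S}(\tilde{\mathbf{y}}^c)$ (this value does not depend on the choice of optimal $\boldsymbol\alpha^c$). The predicted class is $\arg\max_cp_c$; $\hat c$ is the predicted class for the clean labels $\mathbf{y}$. The adversary chooses $\tilde{\mathbf{y}}\in\mathcal{A}(\mathbf{y})=\{\tilde{\mathbf{y}}\in[K]^m:\|\tilde{\mathbf{y}}-\mathbf{y}\|_0\le\lfloor\epsilon m\rfloor\}$, $\epsilon\in[0,1]$. The prediction is certifiably robust if $p_{\hat c}(\tilde{\mathbf{y}})-\max_{c\ne\hat c}p_c(\tilde{\mathbf{y}})>0$ for all $\tilde{\mathbf{y}}\in\mathcal{A}(\mathbf{y})$. *)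

(* Defs.v *)
From HB Require Import structures.
From mathcomp Require Import all_boot all_order all_algebra.
From mathcomp Require Import reals.
From Stdlib Require Import ClassicalEpsilon.
Set Implicit Arguments. Unset Strict Implicit. Unset Printing Implicit Defensive.
Import Order.TTheory GRing.Theory Num.Theory.
Local Open Scope ring_scope.

Section SVM.
Variables (R : realType) (K m : nat) (C : R) (Q : 'M[R]_m) (Qt : 'rV[R]_m).

Definition psd n (A : 'M[R]_n) : Prop := forall x : 'rV[R]_n, 0 <= (x *m A *m x^T) 0 0.

(* bias-free kernel SVM dual D(w) *)
Definition dual_obj (w alpha : 'I_m -> R) : R :=
  - (\sum_i alpha i) + 2^-1 * \sum_i \sum_j w i * w j * alpha i * alpha j * Q i j.
Definition dual_feas (alpha : 'I_m -> R) : Prop := forall i, 0 <= alpha i <= C.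
Definition dual_opt (w alpha : 'I_m -> R) : Prop :=
  dual_feas alpha /\ forall beta, dual_feas beta -> dual_obj w alpha <= dual_obj w beta.

Definition binlab (ytil : 'I_m -> 'I_K) (c : 'I_K) (i : 'I_m) : R :=
  if ytil i == c then 1 else -1.

Definition opt_alpha (ytil : 'I_m -> 'I_K) (c : 'I_K) : 'I_m -> R :=
  epsilon (inhabits (fun _ => 0)) (dual_opt (binlab ytil c)).

Definition score (ytil : 'I_m -> 'I_K) (c : 'I_K) : R :=
  \sum_i binlab ytil c i * opt_alpha ytil c i * Qt 0 i.

(* max_{c <> chat} p_c(ytil) (the default of the big max is one of the
   maximised values, so it does not affect the result when K >= 2) *)
Definition max_other (ytil : 'I_m -> 'I_K) (chat : 'I_K) : R :=
  let d := match [pick c | c != chat] with Some c0 => score ytil c0 | None => 0 end in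
  \big[Num.max/d]_(c | c != chat) score ytil c.

Definition margin (ytil : 'I_m -> 'I_K) (chat : 'I_K) : R :=
  score ytil chat - max_other ytil chat.

Definition admissible (eps : R) (y ytil : 'I_m -> 'I_K) : Prop :=
  (#|[pred i | ytil i != y i]|%:Z <= Num.floor (eps * m%:R))%R.

Definition cert_robust (eps : R) (y : 'I_m -> 'I_K) (chat : 'I_K) : Prop :=
  forall ytil, admissible eps y ytil -> 0 < margin ytil chat.

Record milp_var := MilpVar {
  pstar : R;
  pv : 'I_K -> R;
  bv : 'I_K -> R;
  alphav : 'I_K -> 'I_m -> R;
  ytv : 'I_K -> 'I_m -> R;
  zv : 'I_K -> 'I_m -> R;
  uv : 'I_K -> 'I_m -> R;
  vv : 'I_K -> 'I_m -> R;
  ytpv : 'I_K -> 'I_m -> R;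
  sv : 'I_K -> 'I_m -> R;
  tv : 'I_K -> 'I_m -> R;
  Rv : 'I_K -> 'I_m -> 'I_m -> R }.

Definition is01 (x : R) : Prop := x = 0 \/ x = 1.

Definition onehot (y : 'I_m -> 'I_K) (c : 'I_K) (i : 'I_m) : R :=
  if y i == c then 1 else 0.

Definition Mu (i : 'I_m) : R := \sum_j C * `|Q i j| - 1.
Definition Mv (i : 'I_m) : R := \sum_j C * `|Q i j| + 1.
Definition pL : R := - (C * \sum_i `|Qt 0 i|).
Definition pU : R := C * \sum_i `|Qt 0 i|.

Definition milp_feasible (eps : R) (y : 'I_m -> 'I_K) (chat : 'I_K) (x : milp_var) : Prop :=
  (forall c, c != chat -> is01 (bv x c)) /\
  (forall c i, is01 (ytpv x c i) /\ is01 (sv x c i) /\ is01 (tv x c i)) /\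
  (\sum_i (1 - \sum_c onehot y c i * ytpv x c i) <= (Num.floor (eps * m%:R))%:~R) /\
  (forall i, \sum_c ytpv x c i = 1) /\
  (\sum_(c | c != chat) bv x c = 1) /\
  (forall c, c != chat ->
     pv x c <= pstar x /\ pstar x <= pv x c + (1 - bv x c) * (pU - pL)) /\
  (forall c, pv x c = \sum_i zv x c i * Qt 0 i) /\
  (forall c i,
     \sum_j Rv x c i j * Q i j - 1 - uv x c i + vv x c i = 0) /\
  (forall c i j,
     - (C * (1 + ytv x c i)) <= Rv x c i j + zv x c j <= C * (1 + ytv x c i) /\
     - (C * (1 - ytv x c i)) <= Rv x c i j - zv x c j <= C * (1 - ytv x c i)) /\
  (forall c i,
     - alphav x c i <= zv x c i <= alphav x c i /\
     alphav x c i - C * (1 - ytv x c i) <= zv x c i <= C * (1 + ytv x c i) - alphav x c i /\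
     uv x c i <= Mu i * sv x c i /\
     alphav x c i <= C * (1 - sv x c i) /\
     vv x c i <= Mv i * tv x c i /\
     C * tv x c i <= alphav x c i /\
     0 <= uv x c i /\ 0 <= vv x c i /\
     ytv x c i = 2 * ytpv x c i - 1).

Definition milp_obj (chat : 'I_K) (x : milp_var) : R := pv x chat - pstar x.

Definition milp_optval (eps : R) (y : 'I_m -> 'I_K) (chat : 'I_K) (v : R) : Prop :=
  (exists x, milp_feasible eps y chat x /\ milp_obj chat x = v) /\
  (forall x, milp_feasible eps y chat x -> v <= milp_obj chat x).

Definition adv_optval (eps : R) (y : 'I_m -> 'I_K) (chat : 'I_K) (v : R) : Prop :=
  (exists ytil, admissible eps y ytil /\ margin ytil chat = v) /\
  (forall ytil, admissible eps y ytil -> v <= margin ytil chat).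

End SVM.

(* Main.v *)
Require Import Defs.
From HB Require Import structures.
From mathcomp Require Import all_boot all_order all_algebra.
From mathcomp Require Import reals.
From mathcomp Require Import ring lra.
From mathcomp Require Import classical_sets topology normedtype derive matrix_normedtype.
From Stdlib Require Import ClassicalEpsilon FunctionalExtensionality.
Import Order.TTheory GRing.Theory Num.Theory.
Import numFieldNormedType.Exports.
Local Open Scope ring_scope.

Lemma contM (R : realType) (T : topologicalType) (s t : T -> R) :
  continuous s -> continuous t -> continuous (fun x => s x * t x).
Proof. move=> cs ct x; have H := continuousM (K:=R) (s:=s) (t:=t) (x:=x); apply: H; [exact: cs|exact: ct]. Qed.
Lemma contD (R : realType) (T : topologicalType) (s t : T -> R) :
  continuous s -> continuous t -> continuous (fun x => s x + t x).
Proof. move=> cs ct x; have H := continuousD (K:=R) (V:=R^o) (f:=s) (g:=t) (x:=x); apply: H; [exact: cs|exact: ct]. Qed.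
Lemma contN (R : realType) (T : topologicalType) (s : T -> R) :
  continuous s -> continuous (fun x => - s x).
Proof. move=> cs x; have H := continuousN (K:=R) (V:=R^o) (f:=s) (x:=x); apply: H; exact: cs. Qed.
Lemma contC (R : realType) (T : topologicalType) (c : R) :
  continuous (fun _ : T => c).
Proof. move=> x; exact: cst_continuous. Qed.
Lemma contS (R : realType) (T : topologicalType) n (F : 'I_n -> T -> R) :
  (forall i, continuous (F i)) -> continuous (fun x => \sum_i F i x).
Proof.
move=> cF; have := (@continuous_big R^o _ +%R 0 xpredT add_continuous T (index_enum 'I_n) F).
by move=> H; apply: H => i _; exact: cF.
Qed.

Lemma dual_obj_cont (R : realType) m (w : 'I_m -> R) (Q : 'M[R]_m) : continuous (fun v : 'rV[R]_m => dual_obj Q w (fun i => v ord0 i)).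
Proof.
have co : forall i, continuous (fun v : 'rV[R]_m => v ord0 i).
  by move=> i; exact: coord_continuous.
rewrite /dual_obj.
apply: contD; first by apply: contN; apply: contS.
apply: contM; first exact: contC.
apply: contS => i; apply: contS => j.
apply: contM; last exact: contC.
apply: contM; last exact: co.
apply: contM; last exact: co.
exact: contC.
Qed.

Lemma exists_opt (R : realType) (m : nat) (C : R) (Q : 'M[R]_m) (w : 'I_m -> R) :
  0 <= C -> exists alpha, dual_opt C Q w alpha.
Proof.
move=> C0.
pose F (v : 'rV[R]_m) := dual_obj Q w (fun i => v ord0 i).
pose A : set 'rV[R]_m := fun v => forall i, (`[0, C]%classic : set R) (v ord0 i).
have A0 : (A !=set0)%classic.
  exists 0 => i /=; rewrite mxE in_itv /= lexx C0 //.
have cA : compact A by exact: (@rV_compact R m (fun _ => `[0, C]%classic) (fun _ => @segment_compact R 0 C)).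
have cF : continuous F by exact: dual_obj_cont.
have [c cA' cmin] := EVT_min_rV A0 cA (continuous_subspaceT cF).
have feas : forall v, A v -> dual_feas C (fun i => v ord0 i).
  by move=> v Av i; have := Av i; rewrite /= in_itv.
exists (fun i => c ord0 i); split; first by apply: feas; rewrite inE in cA'.
move=> beta fb.
have := cmin (\row_i beta i).
rewrite /F.
have -> : (fun i => (\row_i0 beta i0) ord0 i) = beta.
  by apply: boolp.funext => i; rewrite mxE.
apply; rewrite inE => i /=; rewrite mxE in_itv /=; exact: fb.
Qed.

Section Quad.
Variables (R : realType) (m : nat) (C : R) (Q : 'M[R]_m).
Hypothesis hQ : forall i j, Q i j = Q j i.

Definition grad (w a : 'I_m -> R) i := \sum_j w i * w j * a j * Q i j - 1.
Definition qf (w d : 'I_m -> R) := \sum_i \sum_j w i * w j * d i * d j * Q i j.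

Lemma obj_expand w a d :
  dual_obj Q w (fun i => a i + d i) =
  dual_obj Q w a + \sum_i grad w a i * d i + 2^-1 * qf w d.
Proof.
rewrite /dual_obj /qf /grad.
have E : \sum_i \sum_j w i * w j * (a i + d i) * (a j + d j) * Q i j =
  \sum_i \sum_j w i * w j * a i * a j * Q i j +
  2 * (\sum_i (\sum_j w i * w j * a j * Q i j) * d i) +
  \sum_i \sum_j w i * w j * d i * d j * Q i j.
  have E1 : \sum_i \sum_j w i * w j * a i * d j * Q i j =
            \sum_i (\sum_j w i * w j * a j * Q i j) * d i.
    rewrite exchange_big /=; apply: eq_bigr => i _; rewrite mulr_suml.
    by apply: eq_bigr => j _; rewrite (hQ j i); ring.
  have E2 : \sum_i \sum_j w i * w j * d i * a j * Q i j =
            \sum_i (\sum_j w i * w j * a j * Q i j) * d i.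
    by apply: eq_bigr => i _; rewrite mulr_suml; apply: eq_bigr => j _; ring.
  rewrite mulr2n mulrDl mul1r -{1}E1 -E2 -!big_split /=.
  by apply: eq_bigr => i _; rewrite -!big_split /=; apply: eq_bigr => j _; ring.
rewrite E big_split /= -sumrN.
have -> : \sum_i (\sum_j w i * w j * a j * Q i j - 1) * d i =
          \sum_i (\sum_j w i * w j * a j * Q i j) * d i - \sum_i d i.
  by rewrite -sumrB; apply: eq_bigr => i _; ring.
rewrite sumrN.
by field.

Qed.

Lemma quad_mx (x : 'rV[R]_m) :
  (x *m Q *m x^T) 0 0 = \sum_i \sum_j x 0 i * x 0 j * Q i j.
Proof.
rewrite mxE exchange_big /=; apply: eq_bigr => i _.
rewrite mxE mulr_suml; apply: eq_bigr => j _; rewrite !mxE.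
ring.
Qed.

Lemma qf_mx w d : qf w d = ((\row_i (w i * d i)) *m Q *m (\row_i (w i * d i))^T) 0 0.
Proof.
rewrite quad_mx /qf; apply: eq_bigr => i _; apply: eq_bigr => j _; rewrite !mxE; ring.
Qed.

Hypothesis psdQ : psd Q.

Lemma qf_ge0 w d : 0 <= qf w d.
Proof. by rewrite qf_mx; apply: psdQ. Qed.

Lemma sum_if (F : 'I_m -> R) i : \sum_k (if k == i then F k else 0) = F i.
Proof. by rewrite -big_mkcond big_pred1_eq. Qed.

Definition dirv i (t : R) : 'I_m -> R := fun k => if k == i then t else 0.

Lemma lin_dir w a i t : \sum_k grad w a k * dirv i t k = grad w a i * t.
Proof.
rewrite -(sum_if (fun k => grad w a k * t) i); apply: eq_bigr => k _.
by rewrite /dirv; case: eqP => _; rewrite ?mulr0.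
Qed.

Lemma qf_dir w i t : qf w (dirv i t) = w i * w i * t * t * Q i i.
Proof.
rewrite /qf -(sum_if (fun k => w k * w k * t * t * Q k k) i); apply: eq_bigr => k _.
rewrite /dirv; case: (eqP (x:=k)) => [->|_].
  rewrite -(sum_if (fun l => w i * w l * t * t * Q i l) i).
  by apply: eq_bigr => l _; case: eqP => [->|_]; rewrite ?mulr0 ?mul0r.
by rewrite big1 // => l _; rewrite !mulr0 !mul0r.
Qed.

Lemma step w a i t : dual_obj Q w (fun k => a k + dirv i t k) =
  dual_obj Q w a + grad w a i * t + 2^-1 * (w i * w i * t * t * Q i i).
Proof. by rewrite obj_expand lin_dir qf_dir. Qed.

Lemma diag_ge0 w i : 0 <= w i * w i * Q i i.
Proof. by have := qf_ge0 w (dirv i 1); rewrite qf_dir !mulr1. Qed.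

Definition kkt w a := forall i, (0 < grad w a i -> a i = 0) /\ (grad w a i < 0 -> a i = C).

Lemma feas_dir a i t : dual_feas C a -> 0 <= a i + t <= C ->
  dual_feas C (fun k => a k + dirv i t k).
Proof.
move=> fa hi k; rewrite /dirv; case: eqP => [->//|_]; rewrite addr0; exact: fa.
Qed.

Lemma kkt_nec w a : dual_opt C Q w a -> kkt w a.
Proof.
move=> [fa opt] i; set g := grad w a i; set h := w i * w i * Q i i.
have h0 : 0 <= h by exact: diag_ge0.
have h1 : 0 < h + 1 by lra.
have [ai0 aiC] := andP (fa i).
split=> gs.
  apply/eqP; rewrite eq_le ai0 andbT; apply/negP => /negP; rewrite -ltNge => ai.
  pose t := Num.min (a i) (g / (h + 1)).
  have t0 : 0 < t by rewrite lt_min ai divr_gt0.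
  have ta : t <= a i by rewrite ge_min lexx.
  have tg : t * (h + 1) <= g by rewrite -ler_pdivlMr // ge_min lexx orbT.
  have hf : 0 <= a i + (-t) <= C by apply/andP; split; lra.
  have := opt _ (feas_dir a i (-t) fa hf).
  rewrite step => H; have : 0 <= g * (-t) + 2^-1 * (h * t * t).
    have E : w i * w i * (-t) * (-t) * Q i i = h * t * t by rewrite /h; ring.
    move: H; rewrite E -/g.
    set A := dual_obj _ _ _; move=> H; lra.
  move=> H2; have : t * (t * (h + 1)) <= t * g by rewrite ler_pM2l.
  nra.
apply/eqP; rewrite eq_le aiC /=; apply/negP => /negP; rewrite -ltNge => ai.
pose t := Num.min (C - a i) (- g / (h + 1)).
have t0 : 0 < t by rewrite lt_min subr_gt0 ai divr_gt0 // oppr_gt0.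
have ta : t <= C - a i by rewrite ge_min lexx.
have tg : t * (h + 1) <= - g by rewrite -ler_pdivlMr // ge_min lexx orbT.
have hf : 0 <= a i + t <= C by apply/andP; split; lra.
have := opt _ (feas_dir a i t fa hf).
rewrite step => H; have : 0 <= g * t + 2^-1 * (h * t * t).
  have E : w i * w i * t * t * Q i i = h * t * t by rewrite /h; ring.
    move: H; rewrite E -/g.
    set A := dual_obj _ _ _; move=> H; lra.
move=> H2; have : t * (t * (h + 1)) <= t * (- g) by rewrite ler_pM2l.
nra.
Qed.

Lemma dual_obj_ext w a b : (forall i, a i = b i) -> dual_obj Q w a = dual_obj Q w b.
Proof.
move=> e; rewrite /dual_obj; congr (- _ + _ * _).
  by apply: eq_bigr => i _.
by apply: eq_bigr => i _; apply: eq_bigr => j _; rewrite !e.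
Qed.

Lemma obj_diff w a b : dual_obj Q w b =
  dual_obj Q w a + \sum_k grad w a k * (b k - a k) + 2^-1 * qf w (fun k => b k - a k).
Proof.
rewrite -obj_expand; apply: dual_obj_ext => i; ring.
Qed.

Lemma vi w a b : dual_feas C a -> kkt w a -> dual_feas C b ->
  0 <= \sum_k grad w a k * (b k - a k).
Proof.
move=> fa ka fb; apply: sumr_ge0 => k _.
have /andP[b0 bC] := fb k.
case: (ltgtP (grad w a k) 0) => [gl|gg|->]; last by rewrite mul0r.
  rewrite ((ka k).2 gl); apply: mulr_le0; [exact: ltW|lra].
rewrite ((ka k).1 gg); apply: mulr_ge0; [exact: ltW|lra].
Qed.

Lemma kkt_suff w a : dual_feas C a -> kkt w a -> dual_opt C Q w a.
Proof.
move=> fa ka; split => // b fb; rewrite (obj_diff w a b).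
have := vi w a b fa ka fb; have := qf_ge0 w (fun k => b k - a k); lra.
Qed.

Lemma opt_qf0 w a b : dual_opt C Q w a -> dual_opt C Q w b ->
  qf w (fun k => b k - a k) = 0.
Proof.
move=> oa ob; have ka := kkt_nec w a oa.
have := vi w a b oa.1 ka ob.1; have := qf_ge0 w (fun k => b k - a k).
have := oa.2 _ ob.1; have := ob.2 _ oa.1; rewrite (obj_diff w a b); lra.
Qed.
End Quad.

Lemma block_val (R : realType) m (Q : 'M[R]_m) (Qtt l : R) (Qt x : 'rV[R]_m) :
  let z := row_mx (l%:M : 'M_1) x in
  (z *m block_mx (Qtt%:M : 'M_1) Qt Qt^T Q *m z^T) 0 0 =
  l * l * Qtt + 2 * l * (Qt *m x^T) 0 0 + (x *m Q *m x^T) 0 0.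
Proof.
move=> z; rewrite /z mul_row_block tr_row_mx mul_row_col.
rewrite !mul_scalar_mx tr_scalar_mx !mul_mx_scalar mulmxDl -scalemxAl.
have -> : x *m Qt^T = (Qt *m x^T)^T by rewrite trmx_mul trmxK.
rewrite !mxE /= mulr1n.
set u := \sum_(j < m) _; set v := \sum_(j < m) _.
ring.
Qed.

Lemma block_zero (R : realType) m (Q : 'M[R]_m) (Qtt : R) (Qt : 'rV[R]_m) :
  psd (block_mx (Qtt%:M : 'M_1) Qt Qt^T Q) -> forall x : 'rV[R]_m,
  (x *m Q *m x^T) 0 0 = 0 -> (Qt *m x^T) 0 0 = 0.
Proof.
move=> P x q0; set a := (Qt *m x^T) 0 0.
have H l : 0 <= l * l * Qtt + 2 * l * a.
  by have := P (row_mx (l%:M : 'M_1) x); rewrite block_val q0 addr0.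
set e := `|Qtt| + 1.
have e0 : 0 < e by rewrite /e; have := normr_ge0 Qtt; lra.
have Qe : Qtt < e by rewrite /e; have := ler_norm Qtt; lra.
pose l := - (a / e).
have ae : a = - (l * e) by rewrite /l mulNr opprK divfK ?gt_eqF.
have H1 := H l; rewrite ae in H1.
have H2 : 0 <= l * l * (Qtt - 2 * e).
  by rewrite (_ : l * l * (Qtt - 2 * e) = l * l * Qtt + 2 * l * - (l * e)) //; ring.
have H3 : l * l * (2 * e - Qtt) <= 0.
  by rewrite (_ : l * l * (2 * e - Qtt) = - (l * l * (Qtt - 2 * e))) ?oppr_le0 //; ring.
have H4 : 0 < 2 * e - Qtt by lra.
have : l * l <= 0.
  by rewrite -(pmulr_lle0 _ H4).
move=> H5; have : l = 0 by nra.
by move=> l0; rewrite ae l0 mul0r oppr0.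
Qed.

Lemma sum_ifT (R : realType) (T : finType) (F : T -> R) i :
  \sum_k (if k == i then F k else 0) = F i.
Proof. by rewrite -big_mkcond big_pred1_eq. Qed.

Lemma max_ub (R : realType) (I : eqType) (r : seq I) (P : pred I) (F : I -> R) d c :
  c \in r -> P c -> F c <= \big[Num.max/d]_(i <- r | P i) F i.
Proof.
elim: r => // i r IH; rewrite inE big_cons => /orP[/eqP<- Pc|cr Pc].
  by rewrite Pc le_max lexx.
case: ifP => _; last exact: IH.
by rewrite le_max IH ?orbT.
Qed.

Lemma max_lub (R : realType) (I : eqType) (r : seq I) (P : pred I) (F : I -> R) d p :
  d <= p -> (forall i, P i -> F i <= p) -> \big[Num.max/d]_(i <- r | P i) F i <= p.
Proof.
move=> dp Fp; elim: r => [|i r IH]; first by rewrite big_nil.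
by rewrite big_cons; case: ifP => // Pi; rewrite ge_max Fp.
Qed.

Section Main.
Variables (R : realType) (K m : nat) (C eps : R) (y : 'I_m -> 'I_K) (Q : 'M[R]_m)
  (Qt : 'rV[R]_m) (chat : 'I_K).
Hypotheses (hK : (2 <= K)%N) (C0 : 0 < C) (heps : 0 <= eps <= 1) (hQ : Q^T = Q)
  (psdQ : psd Q) (Qtt : R) (psdB : psd (block_mx (Qtt%:M : 'M[R]_1) Qt Qt^T Q)).

Lemma hQs : forall i j, Q i j = Q j i.
Proof. by move=> i j; rewrite -{1}hQ mxE. Qed.

Lemma opt_ex (yt : 'I_m -> 'I_K) c : dual_opt C Q (binlab R yt c) (opt_alpha C Q yt c).
Proof.
apply: epsilon_spec; apply: exists_opt; exact: ltW.
Qed.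

Lemma score_eq (yt : 'I_m -> 'I_K) c a : dual_opt C Q (binlab R yt c) a ->
  score C Q Qt yt c = \sum_i binlab R yt c i * a i * Qt 0 i.
Proof.
move=> oa; set w := binlab R yt c; set b := opt_alpha C Q yt c.
have ob : dual_opt C Q w b by exact: opt_ex.
have := @opt_qf0 _ _ _ _ hQs psdQ w a b oa ob.
rewrite qf_mx => /(@block_zero _ _ _ _ _ psdB).
rewrite mxE => H; rewrite /score -/w -/b; apply/eqP; rewrite -subr_eq0 -sumrB.
apply/eqP; rewrite -[RHS]H; apply: eq_bigr => i _; rewrite !mxE; ring.
Qed.

Lemma binlab_pm (yt : 'I_m -> 'I_K) c i : binlab R yt c i = 1 \/ binlab R yt c i = -1.
Proof. by rewrite /binlab; case: eqP; [left|right]. Qed.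

Lemma opt_bd (yt : 'I_m -> 'I_K) c i : 0 <= opt_alpha C Q yt c i <= C.
Proof. exact: (opt_ex yt c).1. Qed.

Lemma score_bound (yt : 'I_m -> 'I_K) c :
  `|score C Q Qt yt c| <= C * \sum_i `|Qt 0 i|.
Proof.
rewrite /score; apply: le_trans (ler_norm_sum _ _ _) _.
rewrite mulr_sumr; apply: ler_sum => i _; rewrite !normrM.
have /andP[a0 aC] := opt_bd yt c i.
have -> : `|binlab R yt c i| = 1 by case: (binlab_pm yt c i) => ->; rewrite ?normrN normr1.
rewrite mul1r ger0_norm //; apply: ler_wpM2r => //.
Qed.

Lemma grad_bound w a i : (forall j, w j = 1 \/ w j = -1) -> dual_feas C a ->
  `|\sum_j w i * w j * a j * Q i j| <= \sum_j C * `|Q i j|.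
Proof.
move=> hw fa; apply: le_trans (ler_norm_sum _ _ _) _.
apply: ler_sum => j _; rewrite !normrM.
have /andP[a0 aC] := fa j.
have e1 : forall k, `|w k| = 1 by move=> k; case: (hw k) => ->; rewrite ?normrN normr1.
rewrite !e1 !mul1r ger0_norm //; apply: ler_wpM2r => //.
Qed.

Lemma other_ex : exists c1 : 'I_K, c1 != chat.
Proof.
have K0 : (0 < K)%N by apply: leq_trans hK.
case: (eqVneq chat (Ordinal K0)) => [e|ne]; last by exists (Ordinal K0); rewrite eq_sym.
by exists (Ordinal hK); rewrite e; apply/eqP => -[].
Qed.

Lemma max_other_ub (yt : 'I_m -> 'I_K) c : c != chat -> score C Q Qt yt c <= max_other C Q Qt yt chat.
Proof. by move=> nc; rewrite /max_other; apply: max_ub => //; rewrite mem_index_enum. Qed.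

Lemma max_other_lub (yt : 'I_m -> 'I_K) p :
  (forall c, c != chat -> score C Q Qt yt c <= p) -> max_other C Q Qt yt chat <= p.
Proof.
move=> H; rewrite /max_other /=; apply: max_lub => //.
case: pickP => [c0 /= nc0|hn]; first exact: H.
by have [c1 nc1] := other_ex; have := hn c1; rewrite /= nc1.
Qed.

Lemma max_other_eq (yt : 'I_m -> 'I_K) p c0 : c0 != chat ->
  (forall c, c != chat -> score C Q Qt yt c <= p) -> p <= score C Q Qt yt c0 ->
  max_other C Q Qt yt chat = p.
Proof.
move=> n0 H H0; apply/eqP; rewrite eq_le max_other_lub //=.
exact: le_trans H0 (max_other_ub yt c0 n0).
Qed.

Lemma argmax_ex (yt : 'I_m -> 'I_K) : exists2 c0, c0 != chat &
  forall c, c != chat -> score C Q Qt yt c <= score C Q Qt yt c0.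
Proof.
have [c1 nc1] := other_ex.
have [c0 P0 H0] := @arg_maxP _ _ _ c1 (fun c => c != chat) (score C Q Qt yt) nc1.
by exists c0.
Qed.

Lemma budget_eq (yt : 'I_m -> 'I_K) :
  \sum_i (1 - \sum_c onehot R y c i * onehot R yt c i) = (#|[pred i | yt i != y i]|)%:R.
Proof.
transitivity (\sum_i (if yt i != y i then (1 : R) else 0)).
  apply: eq_bigr => i _.
  have -> : \sum_c onehot R y c i * onehot R yt c i = if yt i == y i then 1 else 0.
    rewrite -(@sum_ifT R _ (fun c => if yt i == c then (1:R) else 0) (y i)).
    apply: eq_bigr => c _; rewrite /onehot (eq_sym c).
    by case: (y i == c); rewrite ?mul1r ?mul0r.
  by case: (yt i == y i); rewrite ?subrr ?subr0.
by rewrite -big_mkcond sumr_const.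
Qed.

Lemma adm_iff (yt : 'I_m -> 'I_K) :
  admissible eps y yt <->
  \sum_i (1 - \sum_c onehot R y c i * onehot R yt c i) <= (Num.floor (eps * m%:R))%:~R.
Proof. by rewrite budget_eq /admissible -(ler_int R) pmulrn. Qed.

Lemma milp_to_adv x : milp_feasible C Q Qt eps y chat x ->
  exists yt, admissible eps y yt /\ milp_obj chat x = margin C Q Qt yt chat.
Proof.
move=> [hb [hint [hbud [hs1 [hbs [hp [hpv [hgr [hmc hr]]]]]]]]].
pose yt i := odflt chat [pick c | ytpv x c i == 1].
have hoh : forall c i, ytpv x c i = onehot R yt c i.
  move=> c i; rewrite /onehot /yt.
  case: pickP => [c0 /eqP h0 | hn] /=.
    case: (eqVneq c0 c) => [<-//|nc].
    case: (hint c i).1 => // e; exfalso.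
    have := hs1 i; rewrite (bigD1 c0) //= (bigD1 (P := fun k => k != c0) c) /=; last by rewrite eq_sym nc.
    rewrite h0 e.
    have : 0 <= \sum_(k | (k != c0) && (k != c)) ytpv x k i.
      by apply: sumr_ge0 => k _; case: (hint k i).1 => ->.
    lra.
  exfalso; have := hs1 i; rewrite big1 => [|k _]; first by move/eqP; rewrite eq_sym oner_eq0.
  by case: (hint k i).1 => // e; have := hn k; rewrite e eqxx.
have hyt : forall c i, ytv x c i = binlab R yt c i.
  move=> c i; have := hr c i; rewrite hoh /onehot /binlab => [[_ [_ [_ [_ [_ [_ [_ [_ ->]]]]]]]]].
  by case: (yt i == c); ring.
have adm : admissible eps y yt.
  apply/adm_iff; apply: le_trans hbud; rewrite le_eqVlt; apply/orP; left; apply/eqP.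
  by apply: eq_bigr => i _; congr (_ - _); apply: eq_bigr => c _; rewrite hoh.
have hsc : forall c, pv x c = score C Q Qt yt c.
  move=> c; set w := binlab R yt c; set a := alphav x c.
  have hw : forall i, w i = 1 \/ w i = -1 := binlab_pm yt c.
  have hz : forall i, zv x c i = w i * a i.
    move=> i; have := hr c i; rewrite hyt -/w => -[/andP[z1 z2] [/andP[z3 z4] _]].
    by case: (hw i) => e; rewrite e ?mul1r ?mulN1r in z1 z2 z3 z4 *; rewrite /a; lra.
  have hR : forall i j, Rv x c i j = w i * zv x c j.
    move=> i j; have := hmc c i j; rewrite hyt -/w => -[/andP[r1 r2] /andP[r3 r4]].
    by case: (hw i) => e; rewrite e ?mul1r ?mulN1r in r1 r2 r3 r4 *; lra.
  have fa : dual_feas C a.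
    move=> i; have := hr c i; move=> [/andP[z1 z2] [_ [_ [h4 _]]]].
    by rewrite /a; apply/andP; split; [lra|]; case: (hint c i).2.1 => e; rewrite e ?subr0 ?subrr ?mulr1 ?mulr0 in h4; have := C0; lra.
  have hg : forall i, @grad _ _ Q w a i = uv x c i - vv x c i.
    move=> i; have := hgr c i; rewrite /grad.
    have -> : \sum_j Rv x c i j * Q i j = \sum_j w i * w j * a j * Q i j.
      by apply: eq_bigr => j _; rewrite hR hz mulrA.
    lra.
  have ka : @kkt _ _ C Q w a.
    move=> i; have := hr c i; move=> [_ [_ [hu [has [hv [hat [u0 [v0 _]]]]]]]].
    have [s01 t01] := ((hint c i).2.1, (hint c i).2.2).
    have /andP[a0 aC] : 0 <= alphav x c i <= C := fa i.
    rewrite hg /a; split => g0.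
      case: s01 => e; rewrite e in hu has; first by rewrite mulr0 in hu; lra.
      by lra.
    case: t01 => e; rewrite e in hv hat; first by rewrite mulr0 in hv; lra.
    by lra.
  have oa := @kkt_suff R m C Q hQs psdQ w a fa ka.
  rewrite hpv (score_eq yt c a oa); apply: eq_bigr => i _; rewrite hz.
  by rewrite /w /a.
exists yt; split => //.
have [c0 [nc0 b1]] : exists c0, c0 != chat /\ bv x c0 = 1.
  case: (pickP (fun c => (c != chat) && (bv x c == 1))) => [c0 /andP[n0 /eqP b0]|hn].
    by exists c0.
  exfalso; move: hbs; rewrite big1 => [|c nc].
    by move/eqP; rewrite eq_sym oner_eq0.
  by case: (hb c nc) => // e; have := hn c; rewrite nc e eqxx.
rewrite /milp_obj /margin hsc; congr (_ - _); symmetry.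
apply: (max_other_eq yt (pstar x) c0 nc0) => [c nc|]; first by rewrite -hsc; exact: (hp c nc).1.
by rewrite -hsc; have := (hp c0 nc0).2; rewrite b1 subrr mul0r addr0.
Qed.

Lemma max0_pos (g : R) : 0 < g -> Num.max g 0 = g.
Proof. by move=> h; rewrite /Num.max; case: ifP => // h2; lra. Qed.
Lemma max0_npos (g : R) : g <= 0 -> Num.max g 0 = 0.
Proof. by move=> h; rewrite /Num.max; case: ifP => // h2; lra. Qed.
Lemma max0_ge (g : R) : 0 <= Num.max g 0.
Proof. by rewrite /Num.max; case: ifP => // h2; lra. Qed.

Lemma max_split (g : R) : g - Num.max g 0 + Num.max (- g) 0 = 0.
Proof.
by rewrite /Num.max; case: ifP => h1; case: ifP => h2; lra.
Qed.

Lemma adv_to_milp yt : admissible eps y yt ->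
  exists x, milp_feasible C Q Qt eps y chat x /\ milp_obj chat x = margin C Q Qt yt chat.
Proof.
move=> adm.
pose al c := opt_alpha C Q yt c.
pose w c := binlab R yt c.
pose g c i := @grad _ _ Q (w c) (al c) i.
have [c0 nc0 hc0] := argmax_ex yt.
pose x := MilpVar (max_other C Q Qt yt chat) (score C Q Qt yt)
  (fun c => if c == c0 then 1 else 0) al (fun c i => binlab R yt c i)
  (fun c i => w c i * al c i) (fun c i => Num.max (g c i) 0) (fun c i => Num.max (- g c i) 0)
  (fun c i => onehot R yt c i) (fun c i => if 0 < g c i then 1 else 0)
  (fun c i => if g c i < 0 then 1 else 0) (fun c i j => w c i * (w c j * al c j)).
exists x; split; last by [].
have C0' := C0.
have hmo : max_other C Q Qt yt chat = score C Q Qt yt c0 by apply: (max_other_eq yt _ c0 nc0) => // c nc; exact: hc0.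
have hw : forall c i, w c i = 1 \/ w c i = -1 by move=> c i; exact: binlab_pm.
have hal : forall c i, 0 <= al c i <= C by move=> c i; exact: opt_bd.
have ka : forall c, @kkt _ _ C Q (w c) (al c).
  by move=> c; apply: (@kkt_nec R m C Q hQs psdQ); exact: opt_ex.
have gb : forall c i, `|\sum_j w c i * w c j * al c j * Q i j| <= \sum_j C * `|Q i j|.
  by move=> c i; apply: grad_bound => //; exact: (opt_ex yt c).1.
split.
  by move=> c _ /=; case: eqP; [right|left].
split.
  by move=> c i /=; rewrite /is01 /onehot; do !split; case: ifP; auto.
split.
  by apply/adm_iff.
split.
  move=> i /=; rewrite -(@sum_ifT R _ (fun=> 1) (yt i)).
  by apply: eq_bigr => c _; rewrite /onehot eq_sym.
split.
  by rewrite /= (bigD1 c0) //= eqxx big1 ?addr0 // => c /andP[_ /negbTE ->].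
split.
  move=> c nc /=; split; first exact: max_other_ub.
  case: eqP => [->|_]; first by rewrite hmo subrr mul0r addr0.
  rewrite hmo subr0 mul1r /pU /pL.
  have := score_bound yt c; have := score_bound yt c0; rewrite !ler_norml.
  move=> /andP[h1 h2] /andP[h3 h4]; lra.
split.
  by move=> c /=; rewrite /score; apply: eq_bigr.
split.
  move=> c i /=.
  have -> : \sum_j w c i * (w c j * al c j) * Q i j = \sum_j w c i * w c j * al c j * Q i j.
    by apply: eq_bigr => j _; rewrite mulrA.
  by have := max_split (g c i); rewrite /g /grad; lra.
split.
  move=> c i j /=; rewrite -/(w c i).
  have := hal c j; move=> /andP[a0 aC].
  case: (hw c i) => ->; case: (hw c j) => ->; rewrite ?mul1r ?mulN1r ?mulNr ?opprK;
    split; apply/andP; split; lra.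
move=> c i /=; rewrite -/(w c i).
have /andP[a0 aC] := hal c i.
have gi := gb c i.
rewrite ler_norml in gi; move/andP: gi => [gi1 gi2].
have eg : g c i = \sum_j w c i * w c j * al c j * Q i j - 1 by [].
split.
  by case: (hw c i) => ->; rewrite ?mul1r ?mulN1r; apply/andP; split; lra.
split.
  case: (hw c i) => ->; rewrite ?mul1r ?mulN1r; apply/andP; split;
    rewrite ?subrr ?addrN ?mulr0 ?subr0; lra.
split.
  rewrite /Mu; case: (ltP 0 (g c i)) => h /=; rewrite /Num.max /=; rewrite ?mulr1 ?mulr0; lra.
split.
  case: ltP => h; last by rewrite subr0 mulr1.
  by rewrite ((ka c i).1 h) subrr mulr0.
split.
  rewrite /Mv; case: (ltP (g c i) 0) => h /=; rewrite /Num.max /=;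
    case: ifP => h2; rewrite ?mulr1 ?mulr0; lra.
split.
  case: ltP => h; last by rewrite mulr0.
  by rewrite ((ka c i).2 h) mulr1.
split; first exact: max0_ge.
split; first exact: max0_ge.
by rewrite /w /binlab /onehot /=; case: ifP => _; ring.
Qed.

Lemma ffK (g : 'I_m -> 'I_K) : ((finfun g : {ffun 'I_m -> 'I_K}) : 'I_m -> 'I_K) = g.
Proof. by apply: functional_extensionality => i; rewrite ffunE. Qed.

Lemma main_sec : exists v : R,
    milp_optval C Q Qt eps y chat v /\
    adv_optval C Q Qt eps y chat v /\
    (cert_robust C Q Qt eps y chat <-> 0 < v).
Proof.
have adm_y : admissible eps y y.
  rewrite /admissible.
  have -> : #|[pred i | y i != y i]| = 0%N by apply: eq_card0 => i; rewrite !inE eqxx.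
  rewrite floor_ge0; apply: mulr_ge0; [by case/andP: heps|exact: ler0n].
have P0 : admissible eps y (finfun y) by rewrite ffK.
have [f0 Pf0 Hmin] := @arg_minP _ _ _ (finfun y) (fun f : {ffun 'I_m -> 'I_K} => (#|[pred i | f i != y i]|%:Z <= Num.floor (eps * m%:R))%R)
   (fun f : {ffun 'I_m -> 'I_K} => margin C Q Qt f chat) P0.
have Hm : forall yt, admissible eps y yt -> margin C Q Qt f0 chat <= margin C Q Qt yt chat.
  by move=> yt ay; have := Hmin (finfun yt); rewrite ffK; apply.
exists (margin C Q Qt f0 chat); split; [|split].
- split; first exact: adv_to_milp.
  move=> x fx; have [yt [ay ->]] := milp_to_adv x fx; exact: Hm.
- by split; [exists f0|].
- split; first by move=> H; exact: H.
  by move=> v0 yt ay; exact: lt_le_trans v0 (Hm yt ay).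
Qed.
End Main.

Theorem theorem3 (R : realType) (K m : nat) (C eps : R)
    (y : 'I_m -> 'I_K) (Q : 'M[R]_m) (Qt : 'rV[R]_m) (chat : 'I_K) :
  (2 <= K)%N -> (1 <= m)%N -> 0 < C -> 0 <= eps <= 1 ->
  Q^T = Q -> psd Q ->
  (exists Qtt : R, psd (block_mx (Qtt%:M : 'M[R]_1) Qt Qt^T Q)) ->
  (forall c, score C Q Qt y c <= score C Q Qt y chat) ->
  exists v : R,
    milp_optval C Q Qt eps y chat v /\
    adv_optval C Q Qt eps y chat v /\
    (cert_robust C Q Qt eps y chat <-> 0 < v).
Proof.
move=> hK _ C0 heps hQ psdQ [Qtt psdB] _.
exact: (@main_sec R K m C eps y Q Qt chat hK C0 heps hQ psdQ Qtt psdB).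
Qed.
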